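(* Let $f:\mathbb{Z}^n\to\mathbb{R}\cup\{+\infty\}$ be M-convex with bounded $\operatorname{dom} f$, $\emptyset\neq R\subsetneq N$, and $k$ an integer with $\underline{k}\le k\le\overline{k}$. Let $\hat k<k$ be an integer and $x\in M(\hat k)$. Consider the procedure ConstM-IncSlope$(x)$: set $y:=x$; for each $i\in R$ (each exactly once, arbitrary order) and, for this $i$, for each $j\in N\setminus R$ (each exactly once, arbitrary order), if $f'(y;i,j)=\phi^R(x)$ then set $\lambda:=\min\{k-y(R),\bar c(y;i,j)\}$ and replace $y$ by $y+\lambda(\chi_i-\chi_j)$; finally output $x':=y$. If $x'(R)<k$, then $\phi^R(x')>\phi^R(x)$.
   Context: $N=\{1,\dots,n\}$; $\chi_i\in\{0,1\}^n$ is the $i$-th unit vector; $x(R)=\sum_{i\in R}x(i)$. For $f:\mathbb{Z}^n\to\mathbb{R}\cup\{+\infty\}$, $\operatorname{dom} f=\{x\in\mathbb{Z}^n: f(x)<+\infty\}$. $f$ is M-convex if $\operatorname{dom} f\neq\emptyset$ and for all $x,y\in\operatorname{dom} f$ and every $i$ with $x(i)>y(i)$ there is $j$ with $x(j)<y(j)$ such that $f(x)+f(y)\ge f(x-\chi_i+\chi_j)+f(y+\chi_i-\chi_j)$. $f'(x;i,j)=f(x+\chi_i-\chi_j)-f(x)$ (possibly $+\infty$), $\phi^R(x)=\min_{i\in R,\,j\in N\setminus R}f'(x;i,j)$, and $\bar c(y;i,j)=\max\{\lambda\in\mathbb{Z}_{\ge 0}: f(y+\lambda(\chi_i-\chi_j))-f(y)=\lambda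 f'(y;i,j)\}$. $\underline{k}=\min\{x(R):x\in\operatorname{dom} f\}$, $\overline{k}=\max\{x(R):x\in\operatorname{dom} f\}$; for $\underline{k}\le h\le\overline{k}$, $z(h)=\min\{f(x): x(R)=h,\ x\in\operatorname{dom} f\}$ and $M(h)=\{x\in\operatorname{dom} f: x(R)=h,\ f(x)=z(h)\}$. *)

(* Defs.v *)
From HB Require Import structures.
From mathcomp Require Import all_boot all_order all_algebra.
From mathcomp Require Import reals constructive_ereal.
Set Implicit Arguments. Unset Strict Implicit. Unset Printing Implicit Defensive.
Import Order.TTheory GRing.Theory Num.Theory.
Local Open Scope ring_scope.
Local Open Scope ereal_scope.

(* Integer points of Z^n are functions 'I_n -> int; N = 'I_n (0-based). *)
Definition vec (n : nat) := 'I_n -> int.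

Section Defs.
Variables (Re : realType) (n : nat).
Implicit Types (x y : vec n) (f : vec n -> \bar Re) (R : {set 'I_n}).

Definition chi (i : 'I_n) : vec n := fun t => ((t == i) : nat)%:Z.

Definition move x (lam : int) (i j : 'I_n) : vec n :=
  fun t => (x t + lam * (chi i t - chi j t))%R.

(* x + chi_i - chi_j  (so x - chi_i + chi_j = exch x j i) *)
Definition exch x (i j : 'I_n) : vec n := fun t => (x t + chi i t - chi j t)%R.

(* f : Z^n -> R \cup {+oo}: values never -oo *)
Definition no_minus_infty f := forall x, f x != -oo.

Definition dom f x : bool := f x < +oo.

Definition Mconvex f :=
  (exists x, dom f x) /\
  forall x y, dom f x -> dom f y -> forall i, (y i < x i)%R ->
    exists2 j, (x j < y j)%R &
      f (exch x j i) + f (exch y i j) <= f x + f y.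

Definition bounded_dom f := exists B : int, forall x, dom f x -> forall t, (`|x t| <= B)%R.

Definition sumR R x : int := (\sum_(i in R) x i)%R.

Definition fder f x i j := f (exch x i j) - f x.

(* phi^R(x) = min_{i in R, j in N\R} f'(x;i,j) (min over an empty family = +oo) *)
Definition phiR f R x : \bar Re :=
  \big[Order.min/+oo]_(i in R) \big[Order.min/+oo]_(j in ~: R) fder f x i j.

Definition inM f R (h : int) x :=
  dom f x /\ sumR R x = h /\
  forall y, dom f y -> sumR R y = h -> f x <= f y.

Definition cbar_prop f y i j (lam : int) :=
  f (move y lam i j) - f y = (lam%:~R)%:E * fder f y i j.
Definition is_cbar f y i j (c : int) :=
  (0 <= c)%R /\ cbar_prop f y i j c /\
  forall lam : int, (0 <= lam)%R -> cbar_prop f y i j lam -> (lam <= c)%R.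

(* Run of ConstM-IncSlope: process the list of pairs (i,j) in order, starting
   from y, with threshold phi0 = phi^R(x); y' is the resulting vector. *)
Fixpoint run f R (k : int) (phi0 : \bar Re) (ps : seq ('I_n * 'I_n)) y (y' : vec n)
  : Prop :=
  match ps with
  | [::] => y' = y
  | (i, j) :: ps' =>
      if fder f y i j == phi0 then
        exists c, is_cbar f y i j c /\
          run f R k phi0 ps' (move y (Num.min (k - sumR R y) c)%R i j) y'
      else run f R k phi0 ps' y y'
  end.

Definition pair_order (sR : seq 'I_n) (sN : 'I_n -> seq 'I_n) :=
  flatten [seq [seq (i, j) | j <- sN i] | i <- sR].

End Defs.

(* Main.v *)
Require Import Defs.
From HB Require Import structures.
From mathcomp Require Import all_boot all_order all_algebra.
From mathcomp Require Import reals constructive_ereal.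
From Stdlib Require Import FunctionalExtensionality.
From mathcomp Require Import zify ring lra.
Import Order.TTheory GRing.Theory Num.Theory.
Local Open Scope ring_scope.
Local Open Scope ereal_scope.

Lemma ia1 (p q r : int) : (0 <= q)%R -> (0 <= r)%R -> (p + q - 0 < p + 0 - r)%R -> False.
Proof. lia. Qed.
Lemma ia2 (p q : int) : (0 <= q)%R -> (p + 0 - q < p + 1 - 0)%R.
Proof. lia. Qed.

Lemma ia4 (p c q r : int) : (0 <= c)%R -> (0 <= q)%R -> (0 <= r)%R ->
  (p + c * (q - 0) + r - 0 < p)%R -> False.
Proof. nia. Qed.
Lemma ia6 (p c q : int) : (0 <= c)%R -> (0 <= q)%R -> (p < p + c * (q - 0) + 1 - 0)%R.
Proof. nia. Qed.

Section A.
Variables (Re : realType) (n : nat) (f : vec n -> \bar Re) (R : {set 'I_n}).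
Hypothesis nmi : no_minus_infty f.
Hypothesis Mc : Mconvex f.

Definition F (y : vec n) : Re := fine (f y).

Lemma domE {y} : dom f y -> f y = (F y)%:E.
Proof. rewrite /dom /F => h; have := nmi y; case: (f y) h => //. Qed.

Lemma ndomE {y} : ~~ dom f y -> f y = +oo.
Proof. rewrite /dom; have := nmi y; case: (f y) => [r||] //= _; by rewrite ltry. Qed.

Lemma exchR y z i : dom f z -> dom f y -> (y i < z i)%R ->
  exists2 l, (z l < y l)%R & [/\ dom f (exch z l i), dom f (exch y i l) &
     (F (exch z l i) + F (exch y i l) <= F z + F y)%R].
Proof.
move=> hz hy hi; have [l hl H] := (proj2 Mc) z y hz hy i hi.
exists l => //; move: H; rewrite (domE hz) (domE hy) /dom /F.
have := nmi (exch z l i); have := nmi (exch y i l).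
case: (f (exch z l i)) => [a| |]; case: (f (exch y i l)) => [b| |] //=;
 rewrite ?lee_fin //= => _ _ h; by rewrite !ltry.
Qed.

Lemma sum_chi a : (\sum_(t in R) chi a t)%R = ((a \in R) : nat)%:Z.
Proof.
rewrite /chi; case: (boolP (a \in R)) => ha.
  rewrite (bigD1 a) //= eqxx big1 ?addr0 // => t /andP[_ /negbTE ->] //.
by rewrite big1 // => t ht; case: eqP ht => // ->; rewrite (negbTE ha).
Qed.

Lemma sum_exch y a b : sumR R (exch y a b) =
  (sumR R y + ((a \in R) : nat)%:Z - ((b \in R) : nat)%:Z)%R.
Proof. by rewrite /sumR /exch sumrB big_split /= !sum_chi. Qed.

Lemma sum_move y c a b : sumR R (move y c a b) =
  (sumR R y + c * (((a \in R) : nat)%:Z - ((b \in R) : nat)%:Z))%R.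
Proof.
rewrite /sumR /move big_split /= -mulr_sumr sumrB !sum_chi //.
Qed.

Definition dist (y z : vec n) : nat := (\sum_(t : 'I_n) `|y t - z t|%N)%N.

Lemma dist0 y z : dist y z = 0%N -> y = z.
Proof.
move=> /eqP; rewrite sum_nat_eq0 => /forallP h.
apply: functional_extensionality => t; have := h t.
rewrite /= absz_eq0 subr_eq0 => /eqP //.
Qed.


Lemma chi_eq (a : 'I_n) : chi a a = 1%R.
Proof. by rewrite /chi eqxx. Qed.
Lemma chi_neq {a t : 'I_n} : t != a -> chi a t = 0%R.
Proof. by rewrite /chi => /negbTE ->. Qed.

Lemma dist_exch y x i j : (x i < y i)%R -> (y j < x j)%R ->
  (dist (exch y j i) x < dist y x)%N.
Proof.
move=> hi hj.
have ij : i != j by apply/eqP => e; move: hi hj; rewrite e => a b; lia.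
rewrite /dist (bigD1 i) //= [X in (_ < X)%N](bigD1 i) //=.
have h1 : (\sum_(t | t != i) `|exch y j i t - x t|
   <= \sum_(t | t != i) `|y t - x t|)%N.
  apply: leq_sum => t ti; rewrite /exch (chi_neq ti).
  case: (eqVneq t j) => [->|tj]; first by rewrite chi_eq; lia.
  by rewrite (chi_neq tj) addr0 subr0.
have h2 : (`|exch y j i i - x i| < `|y i - x i|)%N.
  by rewrite /exch chi_eq chi_neq //; lia.
by rewrite -addSn; apply: leq_add.
Qed.


Lemma run_cat {k phi0 l1 l2 y y'} : run f R k phi0 (l1 ++ l2) y y' ->
  exists ym, run f R k phi0 l1 y ym /\ run f R k phi0 l2 ym y'.
Proof.
elim: l1 y => [|[i j] l1 IH] y /=; first by move=> h; exists y.
case: (fder f y i j == phi0) => [[c [hc hr]]|hr].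
- by have [ym [h1 h2]] := IH _ hr; exists ym; split => //; exists c; split.
- by have [ym [h1 h2]] := IH _ hr; exists ym.
Qed.

Lemma feas x z : dom f x -> dom f z -> (sumR R x < sumR R z)%R ->
  exists i j, [/\ i \in R, j \notin R & dom f (exch x i j)].
Proof.
move=> dx dz; have [m] := ubnP (dist z x); elim: m z dz => // m IH z dz hd hlt.
case: (boolP [exists i in R, (x i < z i)%R]) => [/existsP [i /andP[hiR hi]]|hn]; last first.
  move: hlt; rewrite ltNge => /negP; case; rewrite /sumR; apply: ler_sum => t ht.
  by move: hn; rewrite negb_exists_in => /forall_inP /(_ t ht); rewrite -leNgt.
have [j hj [d1 d2 _]] := exchR _ _ _ dz dx hi.
case: (boolP (j \in R)) => hjR; last by exists i, j.
apply: (IH (exch z j i)) => //.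
- exact: leq_trans (dist_exch _ _ _ _ hi hj) hd.
- by rewrite sum_exch hjR hiR /= addrK.
Qed.

Section B.
Variables (x : vec n) (khat : int) (ph : Re).
Hypothesis hx : inM f R khat x.
Hypothesis hph1 : forall i j, i \in R -> j \notin R -> dom f (exch x i j) ->
  (ph <= F (exch x i j) - F x)%R.
Hypothesis hph2 : exists i0 j0, [/\ i0 \in R, j0 \notin R, dom f (exch x i0 j0) &
  F (exch x i0 j0) - F x = ph]%R.

Definition g (y : vec n) : Re := (F y - ph * (sumR R y)%:~R)%R.

Lemma hmR y : dom f y -> sumR R y = khat -> (F x <= F y)%R.
Proof.
case: hx => dx [sx hm] dy sy.
by have := hm y dy sy; rewrite (domE dx) (domE dy) lee_fin.
Qed.

Lemma loc a b : dom f (exch x a b) -> (g x <= g (exch x a b))%R.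
Proof.
have [dx [sx _]] := hx.
move=> de; rewrite /g sum_exch.
case: (boolP (a \in R)) => ha; case: (boolP (b \in R)) => hb /=.
- rewrite addrK lerD2r; apply: hmR => //; by rewrite sum_exch ha hb /= addrK.
- have := hph1 _ _ ha hb de; rewrite subr0 intrD; move: (F _) (F x) => p q h.
  set s := (_%:~R); nra.
- have [i0 [j0 [hi0 hj0 dv ev]]] := hph2.
  have c0 : forall (a t : 'I_n), (0 <= chi a t)%R by move=> a' t; rewrite /chi.
  have ai0 : i0 != a by apply: contraNneq ha => <-.
  have hlt : (exch x a b i0 < exch x i0 j0 i0)%R.
    rewrite /exch (chi_neq ai0) chi_eq (@chi_neq j0 i0); last by apply: contraNneq hj0 => <-.
    by apply: ia2; apply: c0.
  have [l hl [d1 d2 hle]] := exchR _ _ _ dv de hlt.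
  have lR : l \notin R.
    apply/negP => lR; move: hl; rewrite /exch.
    have lj0 : l != j0 by apply: contraNneq hj0 => <-.
    have la : l != a by apply: contraNneq ha => <-.
    rewrite (chi_neq lj0) (chi_neq la).
    by apply: ia1; apply: c0.
  have m1 := hmR _ d1; have m2 := hmR _ d2.
  rewrite !sum_exch hi0 hb (negbTE hj0) (negbTE lR) (negbTE ha) /= sx in m1 m2.
  have {m1}m1 := m1 ltac:(by rewrite subr0 addr0 addrK).
  have {m2}m2 := m2 ltac:(by rewrite addr0 subr0 subrK).
  rewrite addr0 intrB.
  move: (F _) (F _) (F _) (F _) (F x) m1 m2 hle ev => p1 p2 p3 p4 p5 m1 m2 hle ev.
  set s := (_%:~R); nra.
- rewrite addr0 subr0 lerD2r; apply: hmR => //; by rewrite sum_exch (negbTE ha) (negbTE hb) /= addr0 subr0.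
Qed.


Lemma GM y : dom f y -> (g x <= g y)%R.
Proof.
have [dx _] := hx.
move=> dy; have [m] := ubnP (dist y x); elim: m y dy => // m IH y dy hd.
case: (eqVneq (dist y x) 0%N) => [/dist0 -> //|].
rewrite /dist sum_nat_eq0 => /forallPn [t /= ht].
have [i hi] : exists i, (x i < y i)%R.
  case: (ltgtP (y t) (x t)) => [ytx|xty|e]; last by move: ht; rewrite e subrr.
  - by have [j hj _] := (proj2 Mc) x y dx dy t ytx; exists j.
  - by exists t.
have [j hj [d1 d2 hle]] := exchR _ _ _ dy dx hi.
have hl := loc _ _ d2.
have hd' : (dist (exch y j i) x < m)%N := leq_trans (dist_exch _ _ _ _ hi hj) hd.
have := IH _ d1 hd'.
move: hle hl; rewrite /g !sum_exch !intrB !intrD.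
move: (F _) (F _) (F _) (F _) => p1 p2 p3 p4.
move: (_%:~R) (_%:~R) (_%:~R) (_%:~R) => q1 q2 q3 q4.
move=> *; nra.
Qed.

Definition S y := dom f y /\ g y = g x.

Lemma Sexch y z i : S y -> S z -> (y i < z i)%R ->
  exists2 l, (z l < y l)%R & S (exch z l i) /\ S (exch y i l).
Proof.
move=> [dy gy] [dz gz] hi.
have [l hl [d1 d2 hle]] := exchR _ _ _ dz dy hi.
exists l => //.
have m1 := GM _ d1; have m2 := GM _ d2.
have e : (g (exch z l i) + g (exch y i l) <= g z + g y)%R.
  move: hle; rewrite /g !sum_exch !intrB !intrD.
  move: (F _) (F _) (F _) (F _) => p1 p2 p3 p4.
  move: (_%:~R) (_%:~R) (_%:~R) (_%:~R) => q1 q2 q3 q4.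
  move=> *; nra.
rewrite gy gz in e.
split; split => //; apply/eqP; rewrite eq_le; apply/andP; split => //; lra.
Qed.


Lemma gS y : S y -> g y = g x. Proof. by case. Qed.

Lemma fderE y i j : S y -> i \in R -> j \notin R -> S (exch y i j) ->
  fder f y i j = ph%:E.
Proof.
move=> [dy gy] hi hj [de ge]; rewrite /fder (domE de) (domE dy) -EFinB; congr EFin.
move: ge; rewrite -gy /g sum_exch hi (negbTE hj) /= subr0 intrD.
move: (F _) (F _) (_%:~R) => p q r; nra.
Qed.

Lemma cbarE y i j (c : int) : S y -> i \in R -> j \notin R ->
  fder f y i j = ph%:E -> (cbar_prop f y i j c <-> S (move y c i j)).
Proof.
move=> [dy gy] hi hj fd; rewrite /cbar_prop fd -EFinM (domE dy).
have sm : sumR R (move y c i j) = (sumR R y + c)%R.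
  by rewrite sum_move hi (negbTE hj) /= subr0 mulr1.
split.
- case: (boolP (dom f (move y c i j))) => dm; last by rewrite (ndomE dm).
  rewrite (domE dm) -EFinB => -[e]; split => //; rewrite -gy /g sm intrD.
  move: e; move: (F _) (F _) (_%:~R) (_%:~R) => p q r t; nra.
- move=> [dm gm]; rewrite (domE dm) -EFinB; congr EFin.
  move: gm; rewrite -gy /g sm intrD.
  move: (F _) (F _) (_%:~R) (_%:~R) => p q r t; nra.
Qed.


Definition Blocked y i (J : 'I_n -> Prop) := forall j, J j -> ~ S (exch y i j).

Lemma persist y i i' j' (J : 'I_n -> Prop) (c : nat) : S y -> i \in R -> i' \in R ->
  j' \notin R -> (forall j, J j -> j \notin R) -> (i' = i \/ J j') ->
  Blocked y i J -> Blocked (move y c%:Z i' j') i J.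
Proof.
move=> Sy hi hi' hj' JR hor hB.
have c0 : forall (a t : 'I_n), (0 <= chi a t)%R by move=> a t; rewrite /chi.
elim: c => [|c IH].
  have -> : move y 0%:Z i' j' = y.
    by apply: functional_extensionality => t; rewrite /move mul0r addr0.
  done.
move=> j Jj Sw.
have ij' : i != j' by apply: contraNneq hj' => <-.
have ij : i != j by apply: contraNneq (JR j Jj) => <-.
have hlt : (y i < exch (move y c.+1%:Z i' j') i j i)%R.
  rewrite /exch /move chi_eq (chi_neq ij) (chi_neq ij').
  by apply: ia6 => //; apply: c0.
have [l hl [S1 S2]] := Sexch _ _ _ Sy Sw hlt.
case: (eqVneq l j) => [elj|lj]; first by apply: (hB j Jj); rewrite -elj.
case: (eqVneq l j') => [elj'|lj']; last first.
  move: hl; rewrite /exch /move (chi_neq lj) (chi_neq lj').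
  by apply: ia4 => //; apply: c0.
subst l.
case: hor => [ei|Jj']; last by apply: (hB j' Jj').
subst i'.
apply: (IH j Jj).
have -> : exch (move y c i j') i j = exch (exch (move y c.+1 i j') i j) j' i.
  apply: functional_extensionality => t; rewrite /exch /move -addn1 PoszD; ring.
done.
Qed.


Section C.
Variable k : int.

Definition pairsOK (ps : seq ('I_n * 'I_n)) :=
  forall p, p \in ps -> (p.1 \in R) && (p.2 \notin R).

Lemma pairsOK_cons {p ps} : pairsOK (p :: ps) -> pairsOK ps.
Proof. by move=> hp q hq; apply: hp; rewrite in_cons hq orbT. Qed.

Lemma sum_moveR {y c i j} : i \in R -> j \notin R ->
  sumR R (move y c i j) = (sumR R y + c)%R.
Proof. by move=> hi hj; rewrite sum_move hi (negbTE hj) /= subr0 mulr1. Qed.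

Lemma run_mono {phi0 ps y y'} : run f R k phi0 ps y y' -> pairsOK ps ->
  (sumR R y <= k)%R -> (sumR R y <= sumR R y')%R /\ (sumR R y' <= k)%R.
Proof.
elim: ps y => [|[i j] ps IH] y /=.
  by move=> -> _ h; split.
move=> hr hp hs.
have /andP[/= hi /= hj] := hp (i,j) (mem_head _ _).
have hp' := pairsOK_cons hp.
case: (fder f y i j == phi0) hr => [[c [[c0 _] hr]]|hr]; last exact: IH.
move: (IH _ hr hp'); rewrite sum_moveR //.
have h1 : (0 <= Num.min (k - sumR R y) c)%R by rewrite le_min subr_ge0 hs.
have h2 : (Num.min (k - sumR R y) c <= k - sumR R y)%R by rewrite ge_min lexx.
move: (Num.min _ _) h1 h2 (sumR R y) (sumR R y') hs => m h1 h2 s s' hs H.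
have [H1 H2] := H ltac:(lia); split => //; lia.
Qed.


Lemma run_step {i j ps y y'} : run f R k (ph%:E) ((i,j)::ps) y y' -> i \in R -> j \notin R ->
  pairsOK ps -> S y -> (sumR R y <= k)%R -> (sumR R y' < k)%R ->
  exists c : nat, [/\ run f R k (ph%:E) ps (move y c%:Z i j) y', S (move y c%:Z i j),
     ~ S (exch (move y c%:Z i j) i j) & (sumR R (move y c%:Z i j) <= k)%R].
Proof.
move=> /= hr hi hj hp Sy hs hs'.
case: eqP hr => [fd [c [[c0 [cp cmax]] hr]]|nfd hr].
- case: c c0 cp cmax hr => // c _ cp cmax hr.
  have ck : (c%:Z <= k - sumR R y)%R.
    rewrite leNgt; apply/negP => ck.
    have e : (Num.min (k - sumR R y) c%:Z = k - sumR R y)%R by apply: min_l; apply: ltW.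
    rewrite e in hr.
    have hsk : (sumR R (move y (k - sumR R y) i j) <= k)%R.
      by rewrite sum_moveR // addrC subrK.
    have [h1 _] := run_mono hr hp hsk.
    move: h1 hs'; rewrite sum_moveR // addrC subrK; move: (sumR R y'); lia.
  rewrite min_r // in hr.
  exists c; split => //.
  - by apply/(cbarE _ _ _ c%:Z Sy hi hj fd).
  - move=> Se; have : cbar_prop f y i j (c.+1)%:Z.
      apply/(cbarE _ _ _ _ Sy hi hj fd).
      have -> : move y c.+1 i j = exch (move y c i j) i j.
        apply: functional_extensionality => t; rewrite /exch /move -addn1 PoszD; ring.
      done.
    by move/(cmax (c.+1)%:Z isT); rewrite lez_nat ltnn.
  - by rewrite sum_moveR //; move: ck; rewrite lerBrDl addrC.
- exists 0%N.
  have -> : move y 0%:Z i j = y.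
    by apply: functional_extensionality => t; rewrite /move mul0r addr0.
  split => // Se; apply: nfd; exact: fderE.
Qed.

Lemma runS {ps y y'} : run f R k (ph%:E) ps y y' -> pairsOK ps -> S y ->
  (sumR R y <= k)%R -> (sumR R y' < k)%R -> S y'.
Proof.
elim: ps y => [|[i j] ps IH] y; first by move=> /= ->.
move=> hr hp Sy hs hs'.
have /andP[/= hi /= hj] := hp (i,j) (mem_head _ _).
have hp' := pairsOK_cons hp.
have [c [hr1 S1 _ s1]] := run_step hr hi hj hp' Sy hs hs'.
exact: IH hr1 hp' S1 s1 hs'.
Qed.

Lemma runB {ps y y'} i (J : 'I_n -> Prop) : run f R k (ph%:E) ps y y' -> pairsOK ps -> S y ->
  (sumR R y <= k)%R -> (sumR R y' < k)%R -> i \in R -> (forall j, J j -> j \notin R) ->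
  (forall p, p \in ps -> p.1 = i \/ J p.2) -> Blocked y i J -> Blocked y' i J.
Proof.
elim: ps y => [|[i' j'] ps IH] y; first by move=> /= ->.
move=> hr hp Sy hs hs' hi JR hps hB.
have /andP[/= hi' /= hj'] := hp (i',j') (mem_head _ _).
have hp' := pairsOK_cons hp.
have [c [hr1 S1 _ s1]] := run_step hr hi' hj' hp' Sy hs hs'.
apply: (IH _ hr1 hp' S1 s1 hs' hi JR).
  by move=> p hp0; apply: hps; rewrite in_cons hp0 orbT.
apply: persist => //; exact: (hps (i',j') (mem_head _ _)).
Qed.

Lemma runA {s y y'} i (J : 'I_n -> Prop) : run f R k (ph%:E) [seq (i, j) | j <- s] y y' ->
  i \in R -> (forall j, j \in s -> j \notin R) -> S y ->
  (sumR R y <= k)%R -> (sumR R y' < k)%R -> (forall j, J j -> j \notin R) ->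
  Blocked y i J -> Blocked y' i (fun j => J j \/ j \in s).
Proof.
elim: s y J => [|j0 s IH] y J.
  by move=> /= -> _ _ _ _ _ _ hB j [Jj|//]; apply: hB.
move=> hr hi hs Sy hsy hs' JR hB.
have hj0 := hs j0 (mem_head _ _).
have hp' : pairsOK [seq (i, j) | j <- s].
  move=> p /mapP [j jin ->] /=; rewrite hi /=; apply: hs; by rewrite in_cons jin orbT.
have [c [hr1 S1 N1 s1]] := run_step hr hi hj0 hp' Sy hsy hs'.
have hB1 : Blocked (move y c%:Z i j0) i (fun j => J j \/ j = j0).
  move=> j [Jj|->] //.
  by apply: (persist _ _ _ _ _ _ Sy hi hi hj0 JR (or_introl erefl) hB).
have := IH _ (fun j => J j \/ j = j0) hr1 hi
  ltac:(by move=> j js; apply: hs; rewrite in_cons js orbT) S1 s1 hs'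
  ltac:(by move=> j [Jj|->] //; apply: JR) hB1.
move=> H j [Jj|jin]; apply: H.
  by left; left.
move: jin; rewrite in_cons => /orP [/eqP ->|jin]; [by left; right | by right].
Qed.


Lemma pairsOK_cat {l1 l2} : pairsOK (l1 ++ l2) -> pairsOK l1 /\ pairsOK l2.
Proof. by move=> h; split=> p hp; apply: h; rewrite mem_cat hp ?orbT. Qed.

Lemma core sR sN x' : perm_eq sR (enum R) ->
  (forall i, i \in R -> perm_eq (sN i) (enum (~: R))) ->
  run f R k (ph%:E) (pair_order sR sN) x x' -> (sumR R x' < k)%R -> (khat <= k)%R ->
  ph%:E < phiR f R x'.
Proof.
move=> psR psN hr hx' hkk.
have [dx [sx _]] := hx.
have Sx : S x by split.
have sxk : (sumR R x <= k)%R by rewrite sx.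
have hp : pairsOK (pair_order sR sN).
  move=> p /flatten_mapP [i iin /mapP [j jin ->]] /=.
  rewrite (perm_mem psR) mem_enum in iin; rewrite iin /=.
  by rewrite (perm_mem (psN i iin)) mem_enum in_setC in jin.
have [dx' gx'] := runS hr hp Sx sxk hx'.
have hB : forall i0 j, i0 \in R -> j \notin R -> ~ S (exch x' i0 j).
  move=> i0 j hi0 hj.
  have hin : i0 \in sR by rewrite (perm_mem psR) mem_enum.
  move: hr hp psR; case/splitPr: hin => s1 s2 hr hp _.
  rewrite /pair_order map_cat flatten_cat /= in hr hp.
  have [hp1 /pairsOK_cat [hp2 hp3]] := pairsOK_cat hp.
  have [y1 [r1 r']] := run_cat hr.
  have [y2 [r2 r3]] := run_cat r'.
  have [m1a m1b] := run_mono r1 hp1 sxk.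
  have [m2a m2b] := run_mono r2 hp2 m1b.
  have [m3a m3b] := run_mono r3 hp3 m2b.
  have s2k : (sumR R y2 < k)%R by apply: le_lt_trans m3a hx'.
  have s1k : (sumR R y1 < k)%R by apply: le_lt_trans m2a s2k.
  have S1 := runS r1 hp1 Sx sxk s1k.
  have S2 := runS r2 hp2 S1 m1b s2k.
  have nR : forall j, j \in sN i0 -> j \notin R.
    by move=> j'; rewrite (perm_mem (psN i0 hi0)) mem_enum in_setC.
  have B2 := runA i0 (fun _ => False) r2 hi0 nR S1 m1b s2k
    (fun j (h : False) => False_ind _ h) (fun j (h : False) => False_ind _ h).
  apply: (runB i0 (fun j => j \notin R) r3 hp3 S2 m2b hx' hi0 (fun _ h => h)) hj.
  - by move=> p hp0; right; have /andP[_ ->] := hp3 p hp0.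
  - move=> j' hj'; apply: B2; right.
    by rewrite (perm_mem (psN i0 hi0)) mem_enum in_setC.
rewrite /phiR; apply: lt_bigmin => [|i hi]; first exact: ltry.
apply: lt_bigmin => [|j]; first exact: ltry.
rewrite in_setC => hj.
case: (boolP (dom f (exch x' i j))) => de; last by rewrite /fder (ndomE de) (domE dx') addye // ltry.
rewrite /fder (domE de) (domE dx') -EFinB lte_fin.
have nS := hB i j hi hj.
have ne : g (exch x' i j) != g x by apply/eqP => e; apply: nS.
have lt : (g x < g (exch x' i j))%R by rewrite lt_neqAle eq_sym ne GM.
move: lt; rewrite -gx' /g sum_exch hi (negbTE hj) /= subr0 intrD.
move: (F _) (F _) (_%:~R) => p q r; nra.
Qed.

End C.
End B.
End A.

Theorem mainTheorem12 (Re : realType) (n : nat) (f : vec n -> \bar Re)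
    (R : {set 'I_n}) (k khat : int) (x : vec n)
    (sR : seq 'I_n) (sN : 'I_n -> seq 'I_n) (x' : vec n) :
  no_minus_infty f -> Mconvex f -> bounded_dom f ->
  R != set0 -> R != [set: 'I_n] ->
  (exists z, dom f z /\ (sumR R z <= k)%R) ->
  (exists z, dom f z /\ (k <= sumR R z)%R) ->
  (khat < k)%R -> inM f R khat x ->
  perm_eq sR (enum R) -> (forall i, i \in R -> perm_eq (sN i) (enum (~: R))) ->
  run f R k (phiR f R x) (pair_order sR sN) x x' ->
  (sumR R x' < k)%R ->
  phiR f R x < phiR f R x'.
Proof.
move=> nmi Mc bd R0 RT zlo zhi hk hx psR psN hrun hx'.
have [dx [sx hmx]] := hx.
have [z [dz hz]] := zhi.
have hxz : (sumR R x < sumR R z)%R by rewrite sx; exact: lt_le_trans hk hz.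
have [i1 [j1 [hi1 hj1 d1]]] := feas _ _ _ R nmi Mc _ _ dx dz hxz.
have P1 : forall i j, i \in R -> j \notin R -> phiR f R x <= fder f x i j.
  move=> i j hi hj; rewrite /phiR.
  apply: le_trans (bigmin_le_cond _ _ hi) _.
  by apply: bigmin_le_cond; rewrite in_setC.
have [i0 i0R e0] := eq_bigmin i1 (fun i => i \in R)
  (fun i => \big[Order.min/+oo]_(j in ~: R) fder f x i j) hi1 (fun _ _ => leey _).
have [j0 j0R e1] := eq_bigmin j1 (fun j => j \in ~: R) (fder f x i0)
  ltac:(by rewrite /= in_setC) (fun _ _ => leey _).
have ephi : phiR f R x = fder f x i0 j0 by rewrite /phiR e0 e1.
have fin : phiR f R x < +oo.
  apply: le_lt_trans (P1 _ _ hi1 hj1) _.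
  by rewrite /fder (domE _ _ _ nmi d1) (domE _ _ _ nmi dx) -EFinB ltry.
have i0R' : i0 \in R by [].
have j0R' : j0 \notin R by move: j0R; rewrite inE.
have d0 : dom f (exch x i0 j0).
  apply/idPn => nd; move: fin.
  by rewrite ephi /fder (ndomE _ _ _ nmi nd) (domE _ _ _ nmi dx) addye.
pose ph := (F _ _ f (exch x i0 j0) - F _ _ f x)%R.
have ephi' : phiR f R x = ph%:E.
  by rewrite ephi /fder (domE _ _ _ nmi d0) (domE _ _ _ nmi dx) -EFinB.
have hph1 : forall i j, i \in R -> j \notin R -> dom f (exch x i j) ->
    (ph <= F _ _ f (exch x i j) - F _ _ f x)%R.
  move=> i j hi hj de; have := P1 _ _ hi hj.
  by rewrite ephi' /fder (domE _ _ _ nmi de) (domE _ _ _ nmi dx) -EFinB lee_fin.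
have hph2 : exists i0 j0, [/\ i0 \in R, j0 \notin R, dom f (exch x i0 j0) &
    F _ _ f (exch x i0 j0) - F _ _ f x = ph]%R.
  by exists i0, j0; split.
rewrite ephi' in hrun *.
exact: (core _ _ _ _ nmi Mc _ _ _ hx hph1 hph2 _ _ _ _ psR psN hrun hx' (ltW hk)).
Qed.
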